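(* Let $p$ be a prime and $n>1$ an integer. If $G$ is a finite $p$-group with $G\in\mathcal{D}_n$, then $G$ has nilpotency class at most $n/2$ and derived length at most $\log_2(n/2)+1$.
   Context: $\mathcal{D}(G)$ denotes the number of conjugacy classes of nontrivial subgroups $H$ of the finite group $G$ with $N_G(H)\neq H$; $\mathcal{D}_n$ is the family of finite groups $G$ with $\mathcal{D}(G)=n$. *)

(* Defs.v *)
From mathcomp Require Import all_boot all_fingroup all_solvable.
From mathcomp Require Import pgroup nilpotent commutator.
Set Implicit Arguments. Unset Strict Implicit. Unset Printing Implicit Defensive.
Local Open Scope group_scope.

Definition nonselfnorm_subgroups (gT : finGroupType) (G : {set gT}) : {set {set gT}} :=
  [set H : {set gT} | [&& group_set H, H \subset G, H != 1 & 'N_G(H) != H]].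

Definition Dnum (gT : finGroupType) (G : {set gT}) : nat :=
  #|[set H :^: G | H in nonselfnorm_subgroups G]|.

(* Derived length: least k with G^`(k) = 1 (searched among k <= #|G|,
   which suffices for solvable groups; analogous to MathComp's nil_class). *)
Definition derived_length (gT : finGroupType) (G : {set gT}) : nat :=
  index 1 (mkseq (fun k => G^`(k)) #|G|.+1).

(* Main.v *)
Require Import Defs.
From mathcomp Require Import all_boot all_fingroup all_solvable.
From mathcomp Require Import pgroup nilpotent commutator.
From mathcomp Require Import zify.
From mathcomp Require Import extremal.
Set Implicit Arguments. Unset Strict Implicit. Unset Printing Implicit Defensive.
Local Open Scope group_scope.


Section S.
Variable gT : finGroupType.
Implicit Types G H K : {group gT}.


Lemma Dnum_code G (code : {set gT} -> nat) k :
  (forall A g, A \in nonselfnorm_subgroups G -> g \in G -> code (A :^ g) = code A) ->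
  (forall i, i < k -> exists2 A, A \in nonselfnorm_subgroups G & code A = i) ->
  k <= Dnum G.
Proof.
move=> codeJ ex; rewrite /Dnum; set C := [set _ | _ in _].
pose F (c : {set {set gT}}) := code (odflt set0 [pick A in c]).
rewrite cardE -(size_map F) -(size_iota 0 k).
apply: (uniq_leq_size (iota_uniq 0 k)) => i; rewrite mem_iota add0n => /= ltik.
have [A SA <-] := ex i ltik; apply/mapP; exists (A :^: G).
  by rewrite mem_enum; apply: imset_f.
rewrite /F; case: pickP => [B /imsetP[g Gg ->] /= | /(_ A)].
  by rewrite codeJ.
by rewrite -{1}(conjsg1 A) imset_f.
Qed.


Lemma chain p G H k : prime p -> p.-group G -> H \subset G ->
  logn p #|H| <= k <= logn p #|G| ->
  exists K : {group gT}, [/\ H \subset K, K \subset G & logn p #|K| = k].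
Proof.
move=> pp; move: {2}(logn p #|G| - k) (erefl (logn p #|G| - k)) => d.
elim: d G => [|d IH] G dE pG sHG /andP[hk kG].
  by exists G; split=> //; lia.
have [eHG|[M maxM sHM]] := maximal_exists sHG.
  by move: dE hk; rewrite -eHG; lia.
have iM := p_maximal_index pG maxM.
have sMG : M \subset G := proper_sub (maxgroupp maxM).
have lM : logn p #|G| = (logn p #|M|).+1.
  by rewrite -(Lagrange sMG) iM lognM ?cardG_gt0 ?prime_gt0 // (logn_prime p pp) eqxx addn1.
have lHM : logn p #|H| <= logn p #|M| by rewrite dvdn_leq_log ?cardG_gt0 ?cardSg.
have [K [sHK sKM lK]] := IH M ltac:(lia) (pgroupS sMG pG) sHM ltac:(lia).
by exists K; split=> //; exact: subset_trans sMG.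
Qed.


Lemma inS (rT : finGroupType) (G : {group rT}) (A : {set rT}) : nilpotent G ->
  (A \in nonselfnorm_subgroups G) = [&& group_set A, A \subset G, A != 1 & A != G].
Proof.
move=> nilG; rewrite inE; apply: andb_id2l => gA.
pose H := Group gA; rewrite -[A]/(gval H).
apply: andb_id2l => sHG; apply: andb_id2l => _.
apply/idP/idP.
  by apply: contra => /eqP->; rewrite (setIidPl (normG G)).
move=> neHG; have prHG : H \proper G by rewrite properEneq neHG.
have := nilpotent_proper_norm nilG prHG.
by rewrite properEneq eq_sym => /andP[].
Qed.

Definition Cl (rT : finGroupType) (G : {set rT}) :=
  [set H :^: G | H in nonselfnorm_subgroups G].

Section Quot.
Variables (G L : {group gT}).
Hypotheses (nLG : L <| G) (nilG : nilpotent G).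
Let pre (A : {set coset_of L}) := coset L @*^-1 A.
Let phi (c : {set {set coset_of L}}) : {set {set gT}} := pre @: c.
Let sGN : G \subset 'N(L) := normal_norm nLG.

Lemma preK A : coset L @* pre A = A.
Proof. by rewrite morphpreK // ; have := im_quotient L; rewrite /quotient => ->; rewrite subsetT. Qed.

Lemma pre_inj : injective pre.
Proof. by move=> A B e; rewrite -(preK A) -(preK B) e. Qed.

Lemma pre_S Hb : Hb \in nonselfnorm_subgroups (G / L) -> pre Hb \in nonselfnorm_subgroups G.
Proof.
rewrite !inS ?quotient_nil // => /and4P[gH sHG n1 nG].
apply/and4P; split.
- exact: (@morphpre_groupset _ _ _ (coset_morphism L) (Group gH)).
- by rewrite -(quotientGK nLG) morphpreS.
- by apply: contra n1 => /eqP e; rewrite -(preK Hb) e morphim1.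
- by apply: contra nG => /eqP e; rewrite -(preK Hb) e.
Qed.

Lemma pre_class Hb : pre @: (Hb :^: (G / L)) = pre Hb :^: G.
Proof.
rewrite /conjugates /quotient morphimEsub // -!imset_comp; apply: eq_in_imset => g Gg /=.
exact: morphpreJ (subsetP sGN g Gg).
Qed.

Lemma img_sub : phi @: Cl (G / L) \subset Cl G.
Proof.
apply/subsetP=> _ /imsetP[_ /imsetP[Hb SHb ->] ->].
by rewrite /phi pre_class; apply: imset_f; apply: pre_S.
Qed.

Lemma img_class (K : {set gT}) : K :^: G \in phi @: Cl (G / L) -> L \subset K /\ K != L.
Proof.
case/imsetP=> _ /imsetP[Hb SHb ->]; rewrite /phi pre_class => e.
have : K \in pre Hb :^: G by rewrite -e -{1}(conjsg1 K) imset_f.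
case/imsetP=> g Gg ->; have nLg : L :^ g = L by apply: (normsP sGN).
have sLp : L \subset pre Hb.
  have gH : group_set Hb by move: SHb; rewrite inS ?quotient_nil // => /and4P[].
  apply/subsetP=> x Lx; apply: mem_morphpre; first exact: (subsetP (normG L)).
  by rewrite /= coset_id // (group1 (Group gH)).
split; first by rewrite -nLg conjSg.
apply/eqP=> eL; move: SHb; rewrite inS ?quotient_nil // => /and4P[_ _ n1 _].
have : pre Hb = L by rewrite -(conjsgK g (pre Hb)) eL (normsP sGN) ?groupV.
by move=> ep; move: n1; rewrite -(preK Hb) ep; have := trivg_quotient L; rewrite /quotient => ->; rewrite eqxx.
Qed.

Lemma quot_bound (E : {set {set {set gT}}}) : E \subset Cl G ->
  (forall K : {set gT}, K :^: G \in E -> ~~ (L \subset K) || (K == L)) ->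
  Dnum (G / L) + #|E| <= Dnum G.
Proof.
move=> sE hE; rewrite /Dnum -/(Cl G) -/(Cl (G / L)).
rewrite -(card_imset _ (@imset_inj _ _ pre pre_inj)).
rewrite -cardsUI; have -> : phi @: Cl (G / L) :&: E = set0.
  apply/setP=> c; rewrite !inE; apply/andP=> [[ci cE]].
  have := subsetP sE c cE; case/imsetP=> K _ eK; rewrite eK in ci cE.
  by have [s ne] := img_class ci; move: (hE K cE); rewrite s (negbTE ne).
by rewrite cards0 addn0 subset_leq_card // subUset img_sub.
Qed.
End Quot.
End S.


Section S.
Variable gT : finGroupType.
Implicit Types G H K : {group gT}.

Lemma conj_eq_normal G (M : {group gT}) (A : {set gT}) g :
  g \in G -> M <| G -> (A :^ g == M) = (A == M).
Proof.
move=> Gg nMG; have nM := normsP (normal_norm nMG).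
apply/eqP/eqP => [e|->]; last exact: nM.
by rewrite -(conjsgK g A) e nM ?groupV.
Qed.

Lemma max_in_S (p : nat) G (M : {group gT}) : p.-group G -> ~~ cyclic G -> maximal M G ->
  gval M \in nonselfnorm_subgroups G.
Proof.
move=> pG ncG maxM; rewrite (inS _ (pgroup_nil pG)).
have prM := maxgroupp maxM.
have ntM : gval M != 1.
  apply: contra ncG => /eqP M1.
  have iM := p_maximal_index pG maxM; rewrite -divgS ?proper_sub // M1 cards1 divn1 in iM.
  apply: prime_cyclic; rewrite iM.
  have [eG|ntG] := eqVneq G 1%G; first by move: prM; rewrite M1 eG properxx.
  by have [] := pgroup_pdiv pG ntG.
by rewrite (valP M) proper_sub //= ntM (proper_neq prM).
Qed.

Lemma three_max (p : nat) G : p.-group G -> ~~ cyclic G -> 3 <= Dnum G.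
Proof.
move=> pG ncG.
have ntG : G :!=: 1 by apply: contra ncG => /eqP->; rewrite cyclic1.
have [e|[M1 max1 _]] := maximal_exists (sub1G G); first by rewrite -e eqxx in ntG.
have [g Gg nM1g] : exists2 g, g \in G & g \notin M1.
  by apply/subsetPn; move: (maxgroupp max1); rewrite properE => /andP[].
have sgG : <[g]> \subset G by rewrite cycle_subG.
have [e|[M2 max2 sgM2]] := maximal_exists sgG.
  by case/negP: ncG; rewrite -e cycle_cyclic.
have gM2 : g \in M2 by rewrite -cycle_subG.
have [u M1u nM2u] : exists2 u, u \in M1 & u \notin M2.
  apply/subsetPn; apply: contra nM1g => s12.
  by rewrite -((maxgroupP max1).2 M2 (maxgroupp max2) s12).
have sM1G := proper_sub (maxgroupp max1); have sM2G := proper_sub (maxgroupp max2).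
have Gu : u \in G := subsetP sM1G u M1u.
have sugG : <[u * g]> \subset G by rewrite cycle_subG groupM.
have [e|[M3 max3 sugM3]] := maximal_exists sugG.
  by case/negP: ncG; rewrite -e cycle_cyclic.
have ugM3 : u * g \in M3 by rewrite -cycle_subG.
have nug1 : u * g \notin M1 by rewrite groupMl.
have nug2 : u * g \notin M2 by rewrite groupMr.
have n21 : gval M2 != M1 by apply: contraNneq nM1g => <-.
have n31 : gval M3 != M1 by apply: contraNneq nug1 => <-.
have n32 : gval M3 != M2 by apply: contraNneq nug2 => <-.
have nM1 := p_maximal_normal pG max1; have nM2 := p_maximal_normal pG max2.
pose code (A : {set gT}) := (if A == M1 then 0 else if A == M2 then 1 else 2)%N.
apply: (@Dnum_code _ G code) => [A x _ Gx|i].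
  by rewrite /code !(conj_eq_normal _ Gx).
case: i => [|[|[|//]]] _.
- by exists (gval M1); [exact: max_in_S pG ncG max1 | rewrite /code eqxx].
- by exists (gval M2); [exact: max_in_S pG ncG max2 | rewrite /code (negbTE n21) eqxx].
- by exists (gval M3); [exact: max_in_S pG ncG max3 | rewrite /code (negbTE n31) (negbTE n32)].
Qed.

End S.



Section S.
Variable gT : finGroupType.
Implicit Types G H K : {group gT}.

Lemma subJ_normal G (M : {group gT}) (A : {set gT}) g :
  g \in G -> M <| G -> (A :^ g \subset M) = (A \subset M).
Proof.
move=> Gg nMG; have nM := normsP (normal_norm nMG).
by rewrite sub_conjg nM ?groupV.
Qed.

Lemma in_S_sub G (K M : {group gT}) : nilpotent G -> M \proper G -> K \subset M ->
  K :!=: 1 -> gval K \in nonselfnorm_subgroups G.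
Proof.
move=> nilG prM sKM ntK; rewrite (inS _ nilG).
have sKG := subset_trans sKM (proper_sub prM).
rewrite (valP K) sKG ntK /=; apply: contraTneq prM => eKG.
by rewrite -eKG properE sKM andbF.
Qed.

Lemma ar1 n i : 2 < n -> n.-1 < i -> i < 2 * n.-1 -> 2 <= i - n + 2 <= n.-1.
Proof. lia. Qed.
Lemma ar2 n i : n.-1 < i -> n + (i - n + 2) - 2 = i.
Proof. lia. Qed.

Lemma quat_count G : 2.-group G -> extremal_class G = Quaternion ->
  2 * nil_class G <= Dnum G.
Proof.
move=> pG /quaternion_classP[n n_gt2 isoG].
have [[x y] genG [oy y2 xy]] := generators_quaternion n_gt2 isoG.
have [_ [_ _ _ clG] _ [_ maxG] _] := quaternion_structure n_gt2 genG isoG.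
have [_ maxX nXG _ _] := extremal_generators_facts (isT : prime 2) genG.
have [oG Gx ox /setDP[Gy nXy]] := genG.
set X := <[x]>%G in maxX nXG nXy.
pose My := <<y ^: G>>%G; pose Mxy := <<(x * y) ^: G>>%G.
have maxMy : maximal My G by rewrite maxG /= eqxx orbT.
have maxMxy : maximal Mxy G by rewrite maxG /= eqxx !orbT.
have yMy : y \in My by rewrite mem_gen // class_refl.
have xyMxy : x * y \in Mxy by rewrite mem_gen // class_refl.
have Xx : x \in X := cycle_id x.
have nXxy : x * y \notin X by rewrite groupMl.
have nMyG := p_maximal_normal pG maxMy.
have prMy := maxgroupp maxMy; have prMxy := maxgroupp maxMxy; have prX := maxgroupp maxX.
have nsub : ~~ (Mxy \subset My).
  apply/negP => sub.
  have eM : gval My = Mxy := (maxgroupP maxMxy).2 My prMy sub.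
  have xMy : x \in My by rewrite -(mulgK y x) groupM ?groupV // eM.
  have sXMy : X \subset My by rewrite cycle_subG.
  have eX : gval My = X := (maxgroupP maxX).2 My prMy sXMy.
  by rewrite -eX yMy in nXy.
have lG : logn 2 #|G| = n by rewrite oG pfactorK.
have lX : logn 2 #|X| = n.-1 by rewrite -orderE ox pfactorK.
have lMy : logn 2 #|My| = n.-1.
  have := Lagrange (proper_sub prMy); rewrite (p_maximal_index pG maxMy) oG => e.
  have := congr1 (logn 2) e; rewrite lognM ?cardG_gt0 // (logn_prime 2 (isT : prime 2)) pfactorK //=.
  by move=> <-; rewrite addn1.
have ly : logn 2 #|<[y]>| = 2 by rewrite -orderE oy (pfactorK 2 (isT : prime 2)).
have nilG := pgroup_nil pG.
pose code (A : {set gT}) :=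
  (if A \subset X then logn 2 #|A| else if A \subset My then n + logn 2 #|A| - 2 else 0)%N.
rewrite clG; apply: (@Dnum_code _ G code) => [A g _ Gg|i lti].
  by rewrite /code !(subJ_normal _ Gg) // cardJg.
have [-> | ipos] := posnP i.
  exists (gval Mxy).
    apply: in_S_sub nilG prMxy (subxx _) _.
    by apply: contraTneq xyMxy => ->; rewrite inE; apply: contraNneq nXxy => ->.
  rewrite /code (negbTE nsub); case: ifP => // sX.
  by move: nXxy; rewrite (subsetP sX).
have [le_in | lt_ni] := leqP i n.-1.
  have [K [_ sKX lK]] := @chain _ 2 X 1%G i isT (pgroupS (proper_sub prX) pG) (sub1G _)
     ltac:(by rewrite cards1 logn1 lX le_in).
  exists (gval K).
    apply: in_S_sub nilG prX sKX _.
    by apply/eqP => e; move: lK ipos; rewrite e cards1 logn1 => <-.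
  by rewrite /code sKX lK.
have sYMy : <[y]> \subset My by rewrite cycle_subG.
have [K [sYK sKMy lK]] := @chain _ 2 My <[y]>%G (i - n + 2) isT (pgroupS (proper_sub prMy) pG) sYMy
   ltac:(by rewrite ly lMy; apply: ar1).
have yK : y \in K by rewrite (subsetP sYK) ?cycle_id.
exists (gval K).
  apply: in_S_sub nilG prMy sKMy _.
  apply: contraTneq yK => ->; rewrite inE.
  by apply: contraNneq nXy => ->.
have nKX : ~~ (K \subset X) by apply: contra nXy => s; rewrite (subsetP s).
by rewrite /code (negbTE nKX) sKMy lK; apply: ar2 lt_ni.
Qed.


End S.


Lemma class_normal (gT : finGroupType) (G M : {group gT}) (A : {set gT}) :
  M <| G -> A \in gval M :^: G -> A = M.
Proof.
by move=> nMG /imsetP[g Gg ->]; exact: (normsP (normal_norm nMG)).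
Qed.

Lemma self_class (gT : finGroupType) (G : {group gT}) (A : {set gT}) : A \in A :^: G.
Proof. by rewrite -{1}(conjsg1 A) imset_f. Qed.



Lemma common (gT : finGroupType) (G : {group gT}) (p : nat) c :
  prime p -> p.-group G -> nil_class G = c.+2 ->
  [/\ gval 'Z(G) \in nonselfnorm_subgroups G, ~~ cyclic G,
      nil_class (G / 'Z(G)) = c.+1 & Dnum (G / 'Z(G)) + 1 <= Dnum G].
Proof.
move=> pp pG clG; have nilG := pgroup_nil pG.
have nZG : 'Z(G) <| G := center_normal G.
have nab : ~~ abelian G by rewrite -nil_class1 clG.
have ncG : ~~ cyclic G by apply: contra nab; apply: cyclic_abelian.
have ntG : G :!=: 1 by apply: contra nab => /eqP->; apply: abelian1.
have SZ : gval 'Z(G) \in nonselfnorm_subgroups G.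
  have gZ : group_set 'Z(G) := valP 'Z(G)%G.
  rewrite (inS _ nilG) gZ center_sub /= center_nil_eq1 // ntG /=.
  by apply: contra nab => /eqP <-; apply: center_abelian.
split=> //; first by rewrite nil_class_quotient_center // clG.
have := @quot_bound _ G 'Z(G) nZG nilG [set gval 'Z(G) :^: G].
rewrite cards1; apply.
  by rewrite sub1set; apply: imset_f.
move=> K; rewrite inE => /eqP e.
have : K \in gval 'Z(G) :^: G by rewrite -e self_class.
by move/(class_normal nZG) ->; rewrite eqxx orbT.
Qed.

Lemma main_ineq c : forall (gT : finGroupType) (G : {group gT}) (p : nat),
  prime p -> p.-group G -> nil_class G = c.+2 -> 2 * c.+2 <= Dnum G.
Proof.
elim: c => [|c IH] gT G p pp pG clG.
  have [SZ ncG clQ bnd] := common pp pG clG.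
  have ncQ : ~~ cyclic (G / 'Z(G)).
    apply/negP => /cyclic_center_factor_abelian; apply/negP.
    by rewrite -nil_class1 clG.
  have := three_max (quotient_pgroup _ pG) ncQ.
  by move=> h; apply: leq_trans bnd; rewrite addn1.
have [SZ ncG clQ bnd] := common pp pG clG.
have IHQ := IH _ _ _ pp (quotient_pgroup _ pG) clQ.
have nilG := pgroup_nil pG; have nZG : 'Z(G) <| G := center_normal G.
case: (pickP [pred K in nonselfnorm_subgroups G | ~~ ('Z(G) \subset K)]) => [K /andP[SK nZK] | allZ].
  have := @quot_bound _ G 'Z(G) nZG nilG [set gval 'Z(G) :^: G; K :^: G].
  rewrite cards2.
  have -> : (gval 'Z(G) :^: G != K :^: G).
    apply/eqP => e; have : K \in gval 'Z(G) :^: G by rewrite e self_class.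
    by move/(class_normal nZG) => eK; rewrite eK subxx in nZK.
  move=> h; apply: leq_trans (h _ _); first by rewrite mulnS addnC leq_add2r.
    by apply/subsetP => C; rewrite !inE => /orP[] /eqP ->; apply: imset_f.
  move=> K'; rewrite !inE => /orP[] /eqP e.
    have : K' \in gval 'Z(G) :^: G by rewrite -e self_class.
    by move/(class_normal nZG) ->; rewrite eqxx orbT.
  have : K' \in K :^: G by rewrite -e self_class.
  case/imsetP => g Gg ->; rewrite -sub_conjgV (normsP (normal_norm nZG)) ?groupV //.
  by rewrite nZK.
have allZ' : forall A, A \in nonselfnorm_subgroups G -> 'Z(G) \subset A.
  by move=> A SA; move: (allZ A); rewrite /= SA /= => /negbFE.
have nab : ~~ abelian G by rewrite -nil_class1 clG.
have ntG : G :!=: 1 by apply: contra nab => /eqP->; apply: abelian1.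
have cycS : forall w, w \in G -> w != 1 -> gval <[w]> \in nonselfnorm_subgroups G.
  move=> w Gw ntw; rewrite (inS _ nilG) cycle_subG Gw cycle_eq1 ntw (valP <[w]>%G) /=.
  by apply: contra ncG => /eqP <-; apply: cycle_cyclic.
have ntZ : 'Z(G) != 1 by rewrite center_nil_eq1.
have [_ pZ _] := pgroup_pdiv (pgroupS (center_sub G) pG) ntZ.
have [u Zu ou] := Cauchy pp pZ.
have Gu : u \in G := subsetP (center_sub G) u Zu.
have ntu : u != 1 by rewrite -order_eq1 ou; apply: contraTneq pp => ->.
have eZ : 'Z(G) = <[u]>.
  by apply/eqP; rewrite eqEsubset allZ' ?cycS // cycle_subG Zu.
have oZ : #|'Z(G)| = p by rewrite eZ -orderE ou.
have sOZ : 'Ohm_1(G) \subset 'Z(G).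
  rewrite (OhmE 1 pG) gen_subG; apply/subsetP => w; rewrite inE => /andP[Gw wp].
  case: (eqVneq w 1) => [->|ntw]; first exact: group1.
  have sZw := allZ' _ (cycS w Gw ntw).
  have ow : #[w] = p.
    apply/(prime_nt_dvdP pp); first by rewrite order_eq1.
    by move: wp; rewrite inE expn1 order_dvdn.
  have : 'Z(G) = <[w]> by apply/eqP; rewrite eqEcard sZw -orderE ow oZ leqnn.
  by move=> e; change (w \in 'Z(G)); rewrite e cycle_id.
have sZO : 'Z(G) \subset 'Ohm_1(G).
  rewrite eZ cycle_subG; change (u \in 'Ohm_1(G)); rewrite (OhmE 1 pG) mem_gen // !inE Gu expn1 -ou expg_order.
  by rewrite eqxx.
have oO : #|'Ohm_1(G)| = p.
  have eO : 'Ohm_1(G) = 'Z(G) by apply/eqP; rewrite eqEsubset sOZ sZO.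
  by rewrite eO.
have /(prime_Ohm1P pG ntG) := oO.
case/orP => [cG | /andP[/eqP p2 /eqP q]]; first by rewrite cG in ncG.
rewrite p2 in pG; rewrite -clG; exact: quat_count pG q.
Qed.


Lemma ar3 a : 0 < a -> (a.-1 + a.-1).+2 = a + a.
Proof. lia. Qed.

Section D.
Variable gT : finGroupType.
Implicit Types G N A B C : {group gT}.

Lemma three_mod G N A B C : N <| G -> A \subset G -> B \subset G -> C \subset G ->
  [~: A, B, C] \subset N -> [~: B, C, A] \subset N -> [~: C, A, B] \subset N.
Proof.
move=> nN sA sB sC.
have nG := normal_norm nN.
have key : forall X Y Z : {group gT}, X \subset G -> Y \subset G -> Z \subset G ->
    ([~: X, Y, Z] \subset N) = ([~: X / N, Y / N, Z / N] :==: 1).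
  move=> X Y Z sX sY sZ.
  have sXY : [~: X, Y] \subset G by rewrite (subset_trans (commg_sub _ _)) // join_subG sX.
  rewrite -subG1 -quotient_sub1; last by rewrite (subset_trans _ nG) // (subset_trans (commg_sub _ _)) // join_subG sXY.
  by rewrite !quotientR // ?(subset_trans _ nG).
rewrite !key // => h1 h2; apply/eqP.
by apply: three_subgroup; apply/eqP.
Qed.

Lemma lcn_comm G i j : [~: 'L_i.+1(G), 'L_j.+1(G)] \subset 'L_(i + j).+2(G).
Proof.
elim: j i => [|j IH] i; first by rewrite addn0.
have nN := lcn_normal (i + j.+1).+2 G.
rewrite commGC; change ([~: 'L_j.+1(G), G, 'L_i.+1(G)] \subset 'L_(i + j.+1).+2(G)).
apply: (three_mod (A := G) nN (subxx G) (lcn_sub _ _) (lcn_sub _ _)).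
  rewrite [[~: G, _]]commGC -lcnSn -addSnnS; apply: IH.
by apply: subset_trans (commSg G (IH i)) _; rewrite addnS.
Qed.

Lemma der_lcn G k : G^`(k) \subset 'L_(2 ^ k)(G).
Proof.
elim: k => [|k IH] //=.
rewrite dergSn; apply: subset_trans (commgSS IH IH) _.
have e : (2 ^ k = (2 ^ k).-1.+1)%N by rewrite prednK ?expn_gt0.
rewrite e; apply: subset_trans (lcn_comm _ _ _) _.
by rewrite ar3 ?expn_gt0 // expnS mul2n addnn.
Qed.

Lemma dl_le G k : G^`(k) = 1 -> k <= #|G| -> derived_length G <= k.
Proof.
move=> Gk kG; rewrite leqNgt /derived_length; apply/negP => lt.
have := before_find 1 lt; rewrite nth_mkseq ?ltnS // Gk /= eqxx.
by [].
Qed.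
End D.


Lemma ar4 c t n : (2 ^ t <= c)%N -> (2 * c <= n)%N -> (2 ^ t.+1 <= n)%N.
Proof. by move=> h1 h2; rewrite expnS (leq_trans _ h2) // leq_mul2l h1. Qed.

Theorem mainTheorem5 (p n : nat) (gT : finGroupType) (G : {group gT}) :
  prime p -> (p.-group G)%g -> 1 < n -> Dnum G = n ->
  2 * nil_class G <= n /\ 2 ^ derived_length G <= n.
Proof.
move=> pp pG n1 Dn; have nilG := pgroup_nil pG.
have cl : 2 * nil_class G <= n.
  case e: (nil_class G) => [|[|c]]; first by [].
    by rewrite muln1.
  by rewrite -Dn; apply: main_ineq pp pG e.
split=> //.
case e: (nil_class G) => [|c].
  move/eqP: e; rewrite nil_class0 => /eqP G1.
  have : derived_length G <= 0 by apply: dl_le; rewrite ?derg0 ?G1.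
  by rewrite leqn0 => /eqP ->; apply: ltnW.
have c0 : 0 < c.+1 by [].
have t1 := trunc_logP (isT : 1 < 2) c0.
have t2 := trunc_log_ltn c.+1 (isT : 1 < 2).
set t := trunc_log 2 c.+1 in t1 t2.
have Gk : G^`(t.+1) = 1.
  apply/trivgP; apply: subset_trans (der_lcn _ _) _.
  have L1 : 'L_(nil_class G).+1(G) = 1 by apply/lcn_nil_classP.
  by rewrite -L1 lcn_sub_leq // e.
have kG : t.+1 <= #|G|.
  have := nilpotent_class G; rewrite nilG e => cG.
  apply: leq_trans (ltnW (esym cG)); rewrite ltnS.
  by rewrite -ltnS (leq_trans (ltn_expl _ (isT : 1 < 2)) t1).
apply: leq_trans (leq_pexp2l _ (dl_le Gk kG)) _ => //.
by apply: ar4 t1 _; rewrite -e.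
Qed.
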